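(* Let $\mathcal{X}\subseteq\mathbb{R}^n$ be a nonempty closed convex set with Euclidean projection $\Pi_{\mathcal{X}}$, let $\Theta\subseteq\mathbb{R}^m$, and let $f:\mathbb{R}^n\times\mathbb{R}^m\to\mathbb{R}$ be differentiable and convex in its first argument. Assume: (A1) there is $G>0$ with $|f(x,\theta)-f(y,\theta)|\le G\|x-y\|$ for all $x,y\in\mathcal{X}$, $\theta\in\Theta$; (A2) there is $L>0$ with $f(y,\theta)\le f(x,\theta)+\nabla_x f(x,\theta)^T(y-x)+\frac{L}{2}\|y-x\|^2$ for all $x,y\in\mathcal{X}$, $\theta\in\Theta$; (A3) there is $\lambda>0$ with $f(y,\theta)\ge f(x,\theta)+\nabla_x f(x,\theta)^T(y-x)+\frac{\lambda}{2}\|y-x\|^2$ for all $x,y\in\mathcal{X}$, $\theta\in\Theta$; (A4) there is $C_\theta>0$ with $\|\nabla_x f(x,\theta_1)-\nabla_x f(x,\theta_2)\|\le C_\theta\|\theta_1-\theta_2\|$ for all $x\in\mathcal{X}$, $\theta_1,\theta_2\in\Theta$. Let $\theta_1,\dots,\theta_T\in\Theta$ be a sequence of parameters and, for $t=2,\dots,T$, let $\hat\theta_t\in\Theta$ be a prediction of $\theta_t$ made from $\theta_1,\dots,\theta_{t-1}$. Let $\eta>0$, $x_1\in\mathcal{X}$, and define (online predictive gradient descent) $x_{t+1}=\Pi_{\mathcal{X}}\big(x_t-\eta\nabla_x f(x_t,\hat\theta_{t+1})\big)$ for $t=1,\dots,T-1$. If $\eta\le 1/L$, then with $C_{\eta,\lambda}=\sqrt{1-\frac{2\lambda\eta}{1+\eta\lambda}}<1$,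 $$\mathbf{Reg}_D(\{x_t\})\le \frac{G\|x_1-x_1^\ast\|}{1-C_{\eta,\lambda}}+\frac{G\,C_{\eta,\lambda}}{1-C_{\eta,\lambda}}\mathcal{P}^\ast+\frac{G\eta C_\theta}{1-C_{\eta,\lambda}}P^\theta .$$
   Context: Write $f_t(x)=f(x,\theta_t)$ and $x_t^\ast=\arg\min_{x\in\mathcal{X}}f(x,\theta_t)$. The dynamic regret is $\mathbf{Reg}_D(\{x_t\})=\sum_{t=1}^T\big(f(x_t,\theta_t)-\min_{x\in\mathcal{X}}f(x,\theta_t)\big)$. The path length is $\mathcal{P}^\ast=\sum_{t=1}^{T-1}\|x_t^\ast-x_{t+1}^\ast\|$, and the parameter prediction regularity is $P^\theta=\sum_{t=2}^T\|\theta_t-\hat\theta_t\|$. All norms are Euclidean. *)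

(* Defs.v *)
From HB Require Import structures.
From mathcomp Require Import all_boot all_order all_algebra.
From mathcomp Require Import all_classical all_reals all_analysis.
Set Implicit Arguments. Unset Strict Implicit. Unset Printing Implicit Defensive.
Import Order.TTheory GRing.Theory Num.Theory.
Import numFieldNormedType.Exports.
Local Open Scope classical_set_scope.
Local Open Scope ring_scope.

Definition dotv {R : realType} {n : nat} (u v : 'rV[R]_n) : R :=
  \sum_(i < n) u ord0 i * v ord0 i.
Definition enorm {R : realType} {n : nat} (u : 'rV[R]_n) : R :=
  Num.sqrt (dotv u u).

Definition is_euclid_proj {R : realType} {n : nat} (X : set 'rV[R]_n)
  (p : 'rV[R]_n -> 'rV[R]_n) : Prop :=
  forall y, X (p y) /\ forall z, X z -> enorm (y - p y) <= enorm (y - z).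

Definition is_gradient {R : realType} {n m : nat}
  (f : 'rV[R]_n -> 'rV[R]_m -> R) (g : 'rV[R]_n -> 'rV[R]_m -> 'rV[R]_n) : Prop :=
  forall x th, differentiable (fun y => f y th) x /\
    forall v, 'D_v (fun y => f y th) x = dotv (g x th) v.

(* Main.v *)
Require Import Defs.
From HB Require Import structures.
From mathcomp Require Import all_boot all_order all_algebra.
From mathcomp Require Import all_classical all_reals all_analysis.
From mathcomp Require Import ring lra zify.
Import Order.TTheory GRing.Theory Num.Theory.
Import numFieldNormedType.Exports.
Local Open Scope classical_set_scope.
Local Open Scope ring_scope.

Section Dot.
Context {R : realType} {n : nat}.
Implicit Types u v w : 'rV[R]_n.

Lemma dotvC u v : dotv u v = dotv v u.
Proof. by apply: eq_bigr => i _; rewrite mulrC. Qed.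
Lemma dotvDl u w v : dotv (u + w) v = dotv u v + dotv w v.
Proof. by rewrite /dotv -big_split; apply: eq_bigr => i _; rewrite !mxE mulrDl. Qed.
Lemma dotvZl a u v : dotv (a *: u) v = a * dotv u v.
Proof. by rewrite /dotv mulr_sumr; apply: eq_bigr => i _; rewrite !mxE mulrA. Qed.
Lemma dotvNl u v : dotv (- u) v = - dotv u v.
Proof. by rewrite -scaleN1r dotvZl mulN1r. Qed.
Lemma dotvBl u w v : dotv (u - w) v = dotv u v - dotv w v.
Proof. by rewrite dotvDl dotvNl. Qed.
Lemma dotvDr u w v : dotv v (u + w) = dotv v u + dotv v w.
Proof. by rewrite dotvC dotvDl !(dotvC v). Qed.
Lemma dotvZr a u v : dotv v (a *: u) = a * dotv v u.
Proof. by rewrite dotvC dotvZl dotvC. Qed.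
Lemma dotvNr u v : dotv v (- u) = - dotv v u.
Proof. by rewrite dotvC dotvNl dotvC. Qed.
Lemma dotvBr u w v : dotv v (u - w) = dotv v u - dotv v w.
Proof. by rewrite dotvDr dotvNr. Qed.
Lemma dotv_ge0 u : 0 <= dotv u u.
Proof. by apply: sumr_ge0 => i _; rewrite -expr2 sqr_ge0. Qed.
Lemma enorm_ge0 u : 0 <= enorm u.
Proof. exact: sqrtr_ge0. Qed.
Lemma enorm_sq u : enorm u ^+ 2 = dotv u u.
Proof. by rewrite sqr_sqrtr // dotv_ge0. Qed.
Lemma dotv0_eq0 u v : dotv v v = 0 -> dotv u v = 0.
Proof.
move=> /eqP; rewrite psumr_eq0; last by move=> i _; rewrite -expr2 sqr_ge0.
move=> /allP H; apply: big1 => i _.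
have := H i (mem_index_enum i); rewrite mulf_eq0 orbb => /eqP ->.
by rewrite mulr0.
Qed.
Lemma cs_sq u v : dotv u v ^+ 2 <= dotv u u * dotv v v.
Proof.
have [b0|bpos] := eqVneq (dotv v v) 0.
  by rewrite dotv0_eq0 // b0 mulr0 expr0n.
have bge := dotv_ge0 v.
have bgt : 0 < dotv v v by rewrite lt_neqAle eq_sym bpos bge.
have := dotv_ge0 (dotv v v *: u - dotv u v *: v).
rewrite !(dotvBl, dotvBr, dotvZl, dotvZr) (dotvC v u) => H.
have : 0 <= dotv v v * (dotv u u * dotv v v - dotv u v ^+ 2) by lra.
rewrite pmulr_rge0 // subr_ge0 //.
Qed.
Lemma cs u v : dotv u v <= enorm u * enorm v.
Proof.
have [c0|cpos] := lerP (dotv u v) 0.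
  by apply: le_trans c0 _; apply: mulr_ge0; apply: enorm_ge0.
rewrite /enorm -sqrtrM ?dotv_ge0 //.
rewrite -(ger0_norm (ltW cpos)) -sqrtr_sqr ler_sqrt; last by apply: mulr_ge0; apply: dotv_ge0.
exact: cs_sq.
Qed.
Lemma enorm_le u v : (enorm u <= enorm v) = (dotv u u <= dotv v v).
Proof. by rewrite /enorm ler_sqrt // dotv_ge0. Qed.
Lemma enormD u v : enorm (u + v) <= enorm u + enorm v.
Proof.
rewrite -(ler_pXn2r (_ : (0 < 2)%N)) ?nnegrE ?addr_ge0 ?enorm_ge0 //.
rewrite enorm_sq sqrrD !enorm_sq !(dotvDl, dotvDr) (dotvC v u).
have := cs u v; lra.
Qed.
Lemma enormZ a u : enorm (a *: u) = `|a| * enorm u.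
Proof.
by rewrite /enorm dotvZl dotvZr mulrA -expr2 sqrtrM ?sqr_ge0 // sqrtr_sqr.
Qed.
Lemma enormN u : enorm (- u) = enorm u.
Proof. by rewrite -scaleN1r enormZ normrN normr1 mul1r. Qed.
Lemma enormB u v : enorm (u - v) = enorm (v - u).
Proof. by rewrite -enormN opprB. Qed.
End Dot.

Lemma conv_mem (R : realType) n (X : set 'rV[R]_n) x z (s : R) :
  convex_set X -> X x -> X z -> 0 <= s -> s <= 1 -> X (x + s *: (z - x)).
Proof.
move=> cX Xx Xz s0 s1.
have sP : Itv.spec (@Itv.num_sem R) (Itv.Real `[0%Z, 1%Z]) s.
  by rewrite /Itv.spec /Itv.num_sem /= in_itv /= s0 s1 ger0_real.
have := cX z x (Itv.Def sP).
rewrite !inE => /(_ Xz Xx).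
congr X.
rewrite /conv /= /unstable.onem scalerBr scalerBl scale1r.
by rewrite addrCA.
Qed.

Lemma real_vi (R : realType) (c e : R) :
  0 <= e -> (forall s, 0 < s -> s <= 1 -> 2 * c <= s * e) -> c <= 0.
Proof.
move=> e0 H; rewrite leNgt; apply/negP => c0.
have ec : 0 < e + c by lra.
set s := c / (e + c).
have s0 : 0 < s by rewrite divr_gt0.
have s1 : s <= 1 by rewrite ler_pdivrMr // mul1r; lra.
have sE : s * (e + c) = c by rewrite /s mulfVK // gt_eqF.
have := H s s0 s1.
have : s * c > 0 by rewrite mulr_gt0.
nra.
Qed.

Lemma real_lim (R : realType) (A B : R) : 0 <= B ->
  (forall s, 0 < s -> s < 1 -> (1 - s) * B <= A) -> B <= A.
Proof.
move=> B0 H; rewrite leNgt; apply/negP => AB.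
have [A0|A0] := lerP 0 A; last first.
  have h : 0 < 1 / 2 :> R by lra.
  have h2 : 1 / 2 < 1 :> R by lra.
  have := H _ h h2; lra.
have Bp : 0 < B by lra.
set s := (B - A) / (2 * B).
have sE : s * (2 * B) = B - A by rewrite /s mulfVK // gt_eqF // mulr_gt0.
have s0 : 0 < s by rewrite /s divr_gt0 // ?mulr_gt0; lra.
have s1 : s < 1 by rewrite /s ltr_pdivrMr ?mulr_gt0 //; lra.
have := H s s0 s1; nra.
Qed.

Lemma proj_vi (R : realType) n (X : set 'rV[R]_n) Pi y z :
  convex_set X -> is_euclid_proj X Pi -> X z ->
  dotv (y - Pi y) (z - Pi y) <= 0.
Proof.
move=> cX hP Xz; have [Xp Hmin] := hP y.
apply: (@real_vi _ _ _ (dotv_ge0 (z - Pi y))) => s s0 s1.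
have := Hmin _ (@conv_mem _ _ _ _ _ _ cX Xp Xz (ltW s0) s1).
rewrite enorm_le.
have -> : y - (Pi y + s *: (z - Pi y)) = (y - Pi y) - s *: (z - Pi y).
  by rewrite opprD addrA.
move: (y - Pi y) (z - Pi y) => d e.
rewrite !(dotvBl, dotvBr, dotvZl, dotvZr) (dotvC e d).
nra.
Qed.

Lemma proj_nonexp (R : realType) n (X : set 'rV[R]_n) Pi a b :
  convex_set X -> is_euclid_proj X Pi ->
  enorm (Pi a - Pi b) <= enorm (a - b).
Proof.
move=> cX hP.
have h1 := @proj_vi _ _ _ _ a _ cX hP (proj1 (hP b)).
have h2 := @proj_vi _ _ _ _ b _ cX hP (proj1 (hP a)).
have h3 := cs (a - b) (Pi a - Pi b).
have e : dotv (Pi a - Pi b) (Pi a - Pi b) <= dotv (a - b) (Pi a - Pi b).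
  move: h1 h2; set p := Pi a; set q := Pi b; move=> h1 h2.
  rewrite !(dotvBl, dotvBr) in h1 h2 *.
  rewrite ?(dotvC p a) ?(dotvC q a) ?(dotvC p b) ?(dotvC q b) ?(dotvC q p) ?(dotvC b a) in h1 h2 *.
  lra.
rewrite -enorm_sq in e.
have p0 := enorm_ge0 (Pi a - Pi b); have q0 := enorm_ge0 (a - b).
nra.
Qed.

Lemma qgrowth (R : realType) n (X : set 'rV[R]_n) (F : 'rV[R]_n -> R)
  (g : 'rV[R]_n -> 'rV[R]_n) (lam : R) xs z :
  convex_set X -> 0 <= lam ->
  (forall x1 y1, X x1 -> X y1 ->
     F y1 >= F x1 + dotv (g x1) (y1 - x1) + lam / 2 * enorm (y1 - x1) ^+ 2) ->
  X xs -> (forall z, X z -> F xs <= F z) -> X z ->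
  lam / 2 * enorm (z - xs) ^+ 2 <= F z - F xs.
Proof.
move=> cX l0 hA3 Xxs hmin Xz.
apply: real_lim; first by rewrite mulr_ge0 ?sqr_ge0 ?divr_ge0.
move=> s s0 s1.
have Xw := @conv_mem _ _ _ _ _ _ cX Xxs Xz (ltW s0) (ltW s1).
have h1 := hA3 _ _ Xw Xz.
have h2 := hA3 _ _ Xw Xxs.
have h3 := hmin _ Xw.
move: h1 h2 h3.
have -> : z - (xs + s *: (z - xs)) = (1 - s) *: (z - xs).
  by rewrite scalerBl scale1r opprD addrA.
have -> : xs - (xs + s *: (z - xs)) = (- s) *: (z - xs).
  by rewrite opprD addrA subrr add0r scaleNr.
set w := xs + s *: (z - xs).
rewrite !enorm_sq !(dotvZl, dotvZr).
set N := dotv (z - xs) (z - xs).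
set d := dotv (g w) (z - xs).
have N0 : 0 <= N := dotv_ge0 _.
move=> h1 h2 h3.
have k : s * ((1 - s) * (lam / 2 * N)) <= s * (F z - F xs).
  have e1 : 0 <= s * (F z - (F w + (1 - s) * d + lam / 2 * ((1 - s) * ((1 - s) * N)))).
    by apply: mulr_ge0; lra.
  have e2 : 0 <= (1 - s) * (F xs - (F w + (- s) * d + lam / 2 * ((- s) * ((- s) * N)))).
    by apply: mulr_ge0; lra.
  nra.
by rewrite ler_pM2l in k.
Qed.

Lemma step (R : realType) n (X : set 'rV[R]_n) Pi (F : 'rV[R]_n -> R)
  (g : 'rV[R]_n -> 'rV[R]_n) (L lam eta : R) x xs :
  convex_set X -> is_euclid_proj X Pi -> 0 < eta -> 0 < L -> eta <= 1 / L -> 0 < lam ->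
  (forall x1 y1, X x1 -> X y1 ->
     F y1 <= F x1 + dotv (g x1) (y1 - x1) + L / 2 * enorm (y1 - x1) ^+ 2) ->
  (forall x1 y1, X x1 -> X y1 ->
     F y1 >= F x1 + dotv (g x1) (y1 - x1) + lam / 2 * enorm (y1 - x1) ^+ 2) ->
  X x -> X xs -> (forall z, X z -> F xs <= F z) ->
  enorm (Pi (x - eta *: g x) - xs) <=
    Num.sqrt (1 - 2 * lam * eta / (1 + eta * lam)) * enorm (x - xs).
Proof.
move=> cX hP e0 L0 eL l0 hA2 hA3 Xx Xxs hmin.
have Xy := proj1 (hP (x - eta *: g x)).
have vi := @proj_vi _ _ _ _ (x - eta *: g x) _ cX hP Xxs.
set y := Pi (x - eta *: g x) in Xy vi *.
have h2 := hA2 _ _ Xx Xy.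
have h3 := hA3 _ _ Xx Xxs.
have h4 := @qgrowth _ _ _ _ _ _ _ _ cX (ltW l0) hA3 Xxs hmin Xy.
have eL' : eta * L <= 1 by rewrite -ler_pdivlMr // mul1r -[X in _ <= X]mul1r.
have key : (1 + eta * lam) * dotv (y - xs) (y - xs) <= (1 - eta * lam) * dotv (x - xs) (x - xs).
  move: vi h2 h3 h4.
  have -> : y - x = (y - xs) - (x - xs) by apply/rowP=> i; rewrite !mxE; ring.
  have -> : xs - x = - (x - xs) by apply/rowP=> i; rewrite !mxE; ring.
  have -> : x - eta *: g x - y = (x - xs) - (y - xs) - eta *: g x.
    by apply/rowP=> i; rewrite !mxE; ring.
  have -> : xs - y = - (y - xs) by apply/rowP=> i; rewrite !mxE; ring.
  have Q0 := dotv_ge0 ((y - xs) - (x - xs)).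
  move: Q0; move: (y - xs) (x - xs) (g x) => b a gg Q0.
  rewrite !enorm_sq !(dotvBl, dotvBr, dotvZl, dotvZr, dotvNl, dotvNr) in Q0 *.
  rewrite ?(dotvC b a) ?(dotvC a gg) ?(dotvC b gg) in Q0 *.
  move=> vi h2 h3 h4.
  have k1 : eta * (L * (dotv b b - dotv a b - (dotv a b - dotv a a))) <=
            (dotv b b - dotv a b - (dotv a b - dotv a a)).
    by rewrite mulrA -[X in _ <= X]mul1r ler_wpM2r.
  have k2 : 0 <= eta * (F y - F xs - lam / 2 * dotv b b). 
    by apply: mulr_ge0; lra.
  nra.
set r := 1 - 2 * lam * eta / (1 + eta * lam).
have p0 : 0 < 1 + eta * lam by rewrite ltr_pwDr ?mulr_gt0.
have rE : r * (1 + eta * lam) = 1 - eta * lam.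
  by rewrite /r; field; rewrite gt_eqF.
have bb : dotv (y - xs) (y - xs) <= r * dotv (x - xs) (x - xs).
  rewrite -(ler_pM2l p0) mulrA (mulrC _ r) rE //.
have [r0|r0] := lerP 0 r.
  by rewrite /enorm -sqrtrM // ler_sqrt // mulr_ge0 // dotv_ge0.
have aa := dotv_ge0 (x - xs).
have bb0 : dotv (y - xs) (y - xs) = 0.
  apply/eqP; rewrite eq_le dotv_ge0 andbT; apply: (le_trans bb).
  by rewrite mulr_le0_ge0 // ltW.
by rewrite /enorm bb0 sqrtr0 mulr_ge0 // sqrtr_ge0.
Qed.

Theorem theorem1 (R : realType) (n m : nat)
  (X : set 'rV[R]_n) (Pi : 'rV[R]_n -> 'rV[R]_n) (Theta : set 'rV[R]_m)
  (f : 'rV[R]_n -> 'rV[R]_m -> R) (g : 'rV[R]_n -> 'rV[R]_m -> 'rV[R]_n)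
  (G L lam Cth eta : R) (T : nat)
  (theta thetahat : nat -> 'rV[R]_m)
  (predictor : nat -> seq 'rV[R]_m -> 'rV[R]_m)
  (x xstar : nat -> 'rV[R]_n) :
  X !=set0 -> closed X -> convex_set X ->
  is_euclid_proj X Pi ->
  is_gradient f g ->
  (forall th, convex_function setT (fun y => f y th)) ->
  (* (A1) *)
  0 < G ->
  (forall x1 y1 th, X x1 -> X y1 -> Theta th ->
     `|f x1 th - f y1 th| <= G * enorm (x1 - y1)) ->
  (* (A2) *)
  0 < L ->
  (forall x1 y1 th, X x1 -> X y1 -> Theta th ->
     f y1 th <= f x1 th + dotv (g x1 th) (y1 - x1) + L / 2 * enorm (y1 - x1) ^+ 2) ->
  (* (A3) *)
  0 < lam ->
  (forall x1 y1 th, X x1 -> X y1 -> Theta th ->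
     f y1 th >= f x1 th + dotv (g x1 th) (y1 - x1) + lam / 2 * enorm (y1 - x1) ^+ 2) ->
  (* (A4) *)
  0 < Cth ->
  (forall x1 th1 th2, X x1 -> Theta th1 -> Theta th2 ->
     enorm (g x1 th1 - g x1 th2) <= Cth * enorm (th1 - th2)) ->
  (1 <= T)%N ->
  (forall t, (1 <= t <= T)%N -> Theta (theta t)) ->
  (* predictions made from theta_1, ..., theta_{t-1} *)
  (forall t, (2 <= t <= T)%N ->
     thetahat t = predictor t [seq theta s | s <- iota 1 t.-1]) ->
  (forall t, (2 <= t <= T)%N -> Theta (thetahat t)) ->
  (* x*_t = argmin_{x in X} f(x, theta_t) *)
  (forall t, (1 <= t <= T)%N ->
     X (xstar t) /\ forall z, X z -> f (xstar t) (theta t) <= f z (theta t)) ->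
  (* online predictive gradient descent *)
  0 < eta ->
  X (x 1%N) ->
  (forall t, (1 <= t <= T.-1)%N ->
     x t.+1 = Pi (x t - eta *: g (x t) (thetahat t.+1))) ->
  eta <= 1 / L ->
  let C := Num.sqrt (1 - 2 * lam * eta / (1 + eta * lam)) in
  C < 1 /\
  \sum_(1 <= t < T.+1) (f (x t) (theta t) - f (xstar t) (theta t))
    <= G * enorm (x 1%N - xstar 1%N) / (1 - C)
       + G * C / (1 - C) * \sum_(1 <= t < T) enorm (xstar t - xstar t.+1)
       + G * eta * Cth / (1 - C) * \sum_(2 <= t < T.+1) enorm (theta t - thetahat t).
Proof.
move=> _ _ cX hP _ _ G0 hA1 L0 hA2 l0 hA3 Cth0 hA4 T1 hth _ hthh hxs e0 X1 hx eL C.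
have p0 : 0 < 1 + eta * lam by rewrite ltr_pwDr ?mulr_gt0.
have C0 : 0 <= C := sqrtr_ge0 _.
have C1 : C < 1.
  rewrite /C -[X in _ < X]sqrtr1 ltr_sqrt ?ltr01 //.
  have : 0 < 2 * lam * eta / (1 + eta * lam) by rewrite divr_gt0 // !mulr_gt0.
  lra.
split=> //.
have Xx : forall t, (1 <= t)%N -> (t <= T)%N -> X (x t).
  elim=> [//|t IH] t1 tT.
  have [->//|t0] := eqVneq t 0%N.
  rewrite hx; first exact: (proj1 (hP _)).
  by apply/andP; split; lia.
set d := fun t => enorm (x t - xstar t).
have rec : forall t, (1 <= t < T)%N ->
    d t.+1 <= C * d t + C * enorm (xstar t - xstar t.+1)
              + eta * Cth * enorm (theta t.+1 - thetahat t.+1).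
  move=> t /andP [t1 tT].
  have tT' : (1 <= t <= T.-1)%N by apply/andP; split; lia.
  have Xt := Xx t t1 (ltnW tT).
  have [Xs1 min1] := hxs t.+1 (ltac:(apply/andP; split; lia)).
  have [Xs0 _] := hxs t (ltac:(apply/andP; split; lia)).
  have Th1 := hth t.+1 (ltac:(apply/andP; split; lia)).
  have Th2 := hthh t.+1 (ltac:(apply/andP; split; lia)).
  rewrite /d hx //.
  set v := x t.
  set yy := Pi (v - eta *: g v (theta t.+1)).
  have -> : Pi (v - eta *: g v (thetahat t.+1)) - xstar t.+1 =
    (Pi (v - eta *: g v (thetahat t.+1)) - yy) + (yy - xstar t.+1).
    by rewrite addrA subrK.
  apply: (le_trans (enormD _ _)).
  have s1 : enorm (Pi (v - eta *: g v (thetahat t.+1)) - yy) <=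
            eta * Cth * enorm (theta t.+1 - thetahat t.+1).
    apply: (le_trans (@proj_nonexp _ _ _ _ _ _ cX hP)).
    have -> : v - eta *: g v (thetahat t.+1) - (v - eta *: g v (theta t.+1)) =
              eta *: (g v (theta t.+1) - g v (thetahat t.+1)).
      by apply/rowP=> i; rewrite !mxE; ring.
    rewrite enormZ gtr0_norm // -mulrA ler_pM2l //.
    exact: hA4.
  have s2 : enorm (yy - xstar t.+1) <= C * enorm (v - xstar t.+1).
    apply: (@step _ _ X Pi (fun y => f y (theta t.+1)) (fun y => g y (theta t.+1)) L lam eta) => //.
    - by move=> x1 y1 X1' Y1'; apply: hA2.
    - by move=> x1 y1 X1' Y1'; apply: hA3.
  have s3 : enorm (v - xstar t.+1) <= enorm (v - xstar t) + enorm (xstar t - xstar t.+1).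
    by have := enormD (v - xstar t) (xstar t - xstar t.+1); rewrite addrA subrK.
  have := ler_wpM2l C0 s3.
  lra.
set S := \sum_(1 <= t < T.+1) d t.
set P := \sum_(1 <= t < T) enorm (xstar t - xstar t.+1).
set E := \sum_(2 <= t < T.+1) enorm (theta t - thetahat t).
have reg : \sum_(1 <= t < T.+1) (f (x t) (theta t) - f (xstar t) (theta t)) <= G * S.
  rewrite /S mulr_sumr; apply: ler_sum_nat => t /andP [t1 tT].
  have tT' : (t <= T)%N by lia.
  have [Xs _] := hxs t (ltac:(apply/andP; split; lia)).
  apply: le_trans (ler_norm _) _.
  by apply: hA1 => //; [exact: Xx | apply: hth; apply/andP; split].
have d0 : forall t, 0 <= d t by move=> t; exact: enorm_ge0.
have SE : S = d 1%N + \sum_(1 <= t < T) d t.+1 by rewrite /S big_nat_recl.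
have SE2 : S = \sum_(1 <= t < T) d t + d T by rewrite /S big_nat_recr.
have EE : E = \sum_(1 <= t < T) enorm (theta t.+1 - thetahat t.+1).
  by rewrite /E big_add1.
have hs : \sum_(1 <= t < T) d t.+1 <=
    C * \sum_(1 <= t < T) d t + C * P + eta * Cth * E.
  rewrite EE /P !mulr_sumr -!big_split /=.
  exact: ler_sum_nat.
have key : (1 - C) * S <= d 1%N + C * P + eta * Cth * E.
  have := mulr_ge0 C0 (d0 T); rewrite SE2 in SE *; lra.
have C1' : 0 < 1 - C by lra.
have SS : S <= (d 1%N + C * P + eta * Cth * E) / (1 - C).
  by rewrite ler_pdivlMr // mulrC.
apply: (le_trans reg).
have -> : G * enorm (x 1%N - xstar 1%N) / (1 - C) + G * C / (1 - C) * P +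
    G * eta * Cth / (1 - C) * E = G * ((d 1%N + C * P + eta * Cth * E) / (1 - C)).
  by rewrite /d; field; rewrite gt_eqF.
by rewrite ler_pM2l.
Qed.
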